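(* For any connected graphs $G$ and $H$, $$G_{SR}\boxtimes H_{SR}\sqsubseteq (G\boxtimes H)_{SR}\sqsubseteq G_{SR}\oplus H_{SR}.$$
   Context: All graphs are simple; $d_G$ is the shortest-path distance. A vertex $u$ is maximally distant from $v$ in $G$ if for every neighbor $w$ of $u$, $d_G(v,w)\le d_G(u,v)$; $u,v$ are mutually maximally distant if each is maximally distant from the other. The strong resolving graph $G_{SR}$ of $G$ has vertex set $V(G)$, with $u,v$ adjacent iff $u$ and $v$ are mutually maximally distant in $G$. The strong product $G\boxtimes H$ has vertex set $V(G)\times V(H)$, with $(a,b)\sim(c,d)$ iff ($a=c$ and $bd\in E(H)$) or ($ac\in E(G)$ and $b=d$) or ($ac\in E(G)$ and $bd\in E(H)$). The Cartesian sum $G\oplus H$ has vertex set $V(G)\times V(H)$, with $(a,b)\sim(c,d)$ iff $ac\in E(G)$ or $bd\in E(H)$. For graphs $G'=(V',E')$ and $G=(V,E)$, $G'\sqsubseteq G$ means $V'\subseteq V$ and $E'\subseteq E$. *)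

(* Defs.v *)
From mathcomp Require Import all_boot.
Set Implicit Arguments. Unset Strict Implicit. Unset Printing Implicit Defensive.

Section Graphs.
Variable T : finType.

Definition simple_graph (e : rel T) : Prop := irreflexive e /\ symmetric e.
Definition connected_graph (e : rel T) : Prop := forall u v : T, connect e u v.

Definition walkn (e : rel T) (u v : T) (n : nat) : bool :=
  [exists p : n.-tuple T, path e u p && (last u p == v)].

Lemma connect_walkn (e : rel T) (u v : T) : connect e u v -> exists n, walkn e u v n.
Proof.
move/connectP=> [p pp lp]; exists (size p); apply/existsP.
exists (in_tuple p); by rewrite /= pp -lp eqxx.
Qed.

(* shortest-path distance d_G(u,v) (meaningful when u,v are connected; 0 otherwise) *)
Definition dist (e : rel T) (u v : T) : nat :=
  match @idP (connect e u v) with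
  | ReflectT h => ex_minn (connect_walkn h)
  | ReflectF _ => 0
  end.

Definition max_dist (e : rel T) (u v : T) : bool :=
  [forall w, e u w ==> (dist e v w <= dist e u v)].

Definition strong_resolving (e : rel T) : rel T :=
  fun u v => (u != v) && max_dist e u v && max_dist e v u.
End Graphs.

Definition strong_prod (T1 T2 : finType) (e1 : rel T1) (e2 : rel T2) : rel (T1 * T2) :=
  fun x y => [|| (x.1 == y.1) && e2 x.2 y.2,
                 e1 x.1 y.1 && (x.2 == y.2)
               | e1 x.1 y.1 && e2 x.2 y.2].

Definition cart_sum (T1 T2 : finType) (e1 : rel T1) (e2 : rel T2) : rel (T1 * T2) :=
  fun x y => e1 x.1 y.1 || e2 x.2 y.2.

Definition subgraph (T : finType) (e' e : rel T) : Prop := forall x y, e' x y -> e x y.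

(* Main.v *)
Require Import Defs.
From mathcomp Require Import all_boot.
From mathcomp Require Import zify.
Set Implicit Arguments. Unset Strict Implicit.

Section D.
Variable T : finType.
Variable e : rel T.

Lemma walkn0 u v : walkn e u v 0 = (u == v).
Proof.
apply/existsP/eqP.
  by case=> p; rewrite (tuple0 p) /= => /eqP.
by move=> <-; exists [tuple]; rewrite /= eqxx.
Qed.

Lemma walknS u v n : walkn e u v n.+1 = [exists w, e u w && walkn e w v n].
Proof.
apply/existsP/existsP.
  case=> p; case/tupleP: p => w p /= /andP[/andP[euw pp] lp].
  by exists w; rewrite euw; apply/existsP; exists p; rewrite pp.
case=> w /andP[euw /existsP[p /andP[pp lp]]].
by exists [tuple of w :: p]; rewrite /= euw pp.
Qed.

Lemma walkn_rcons u w v n : walkn e u w n -> e w v -> walkn e u v n.+1.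
Proof.
case/existsP=> p /andP[pp /eqP lp] ewv; apply/existsP.
exists (Tuple (rcons_tupleP p v)); rewrite /= rcons_path pp last_rcons lp ewv eqxx.
by [].
Qed.

Lemma walkn_connect u v n : walkn e u v n -> connect e u v.
Proof. by case/existsP=> p /andP[pp /eqP lp]; apply/connectP; exists (val p). Qed.

Lemma dist_walk u v : connect e u v -> walkn e u v (dist e u v).
Proof.
move=> h; rewrite /dist; destruct (@idP (connect e u v)) as [h'|h']; last by [].
by case: ex_minnP.
Qed.

Lemma dist_min u v n : walkn e u v n -> dist e u v <= n.
Proof.
move=> w; rewrite /dist; destruct (@idP (connect e u v)) as [h'|h']; last by move/walkn_connect: w.
by case: ex_minnP => m _ /(_ _ w).
Qed.

Lemma dist_eq0 u v : connect e u v -> dist e u v = 0 -> u = v.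
Proof. by move=> c H; move: (dist_walk c); rewrite H walkn0 => /eqP. Qed.

Lemma dist0 u : dist e u u = 0.
Proof. by apply/eqP; rewrite -leqn0; apply: dist_min; rewrite walkn0. Qed.

Hypothesis Hsym : symmetric e.
Hypothesis Hconn : connected_graph e.

Lemma walkn_sym n : forall u v, walkn e u v n -> walkn e v u n.
Proof.
elim: n => [|n IH] u v; first by rewrite !walkn0 eq_sym.
rewrite walknS => /existsP[w /andP[euw wwv]].
by apply: walkn_rcons (IH _ _ wwv) _; rewrite Hsym.
Qed.

Lemma dist_sym u v : dist e u v = dist e v u.
Proof.
by apply/eqP; rewrite eqn_leq !dist_min // walkn_sym // dist_walk.
Qed.

Lemma dist_edge u w v : e u w -> dist e u v <= (dist e w v).+1.
Proof.
move=> euw; apply: dist_min; rewrite walknS; apply/existsP; exists w.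
by rewrite euw dist_walk.
Qed.

Lemma dist_edge2 u w v : e u w -> dist e w v <= (dist e u v).+1.
Proof. by move=> euw; apply: dist_edge; rewrite Hsym. Qed.

Lemma dist_step u v n : dist e u v = n.+1 -> exists w, e u w /\ dist e w v = n.
Proof.
move=> H; have := dist_walk (Hconn u v); rewrite H walknS.
case/existsP=> w /andP[euw wv]; exists w; split=> //.
apply/eqP; rewrite eqn_leq dist_min //=.
by have := dist_edge v euw; rewrite H.
Qed.
Lemma sr_coord u v w : strong_resolving e u v -> (w == u) || e u w ->
  dist e v w <= dist e u v.
Proof.
case/andP=> [/andP[_ /forallP m] _] /orP[/eqP->|uw]; first by rewrite dist_sym.
exact: (implyP (m w) uw).
Qed.

Lemma eq_coord u w : (w == u) || e u w -> dist e u w <= 1.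
Proof.
case/orP=> [/eqP->|uw]; first by rewrite dist0.
by have := dist_edge w uw; rewrite dist0.
Qed.

Lemma sr_pos u v : strong_resolving e u v -> 0 < dist e u v.
Proof.
case/andP=> [/andP[neq _] _]; rewrite lt0n; apply/eqP => /(dist_eq0 (Hconn u v)) E.
by rewrite E eqxx in neq.
Qed.
End D.

Section P.
Variables (T1 T2 : finType) (e1 : rel T1) (e2 : rel T2).
Hypothesis (s1 : symmetric e1) (c1 : connected_graph e1).
Hypothesis (s2 : symmetric e2) (c2 : connected_graph e2).
Local Notation p := (strong_prod e1 e2).

Lemma lazy1 (a c : T1) n : dist e1 a c <= n.+1 ->
  exists a', ((a' == a) || e1 a a') /\ dist e1 a' c = minn (dist e1 a c) n.
Proof.
move=> H; case: (leqP (dist e1 a c) n) => h.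
  by exists a; rewrite eqxx; split=> //; lia.
have E : dist e1 a c = n.+1 by lia.
case: (dist_step c1 E) => w [aw wc]; exists w; rewrite aw orbT; split=> //; lia.
Qed.

Lemma lazy2 (a c : T2) n : dist e2 a c <= n.+1 ->
  exists a', ((a' == a) || e2 a a') /\ dist e2 a' c = minn (dist e2 a c) n.
Proof.
move=> H; case: (leqP (dist e2 a c) n) => h.
  by exists a; rewrite eqxx; split=> //; lia.
have E : dist e2 a c = n.+1 by lia.
case: (dist_step c2 E) => w [aw wc]; exists w; rewrite aw orbT; split=> //; lia.
Qed.

Lemma prod_walk c d n : forall a b,
  maxn (dist e1 a c) (dist e2 b d) = n -> walkn p (a, b) (c, d) n.
Proof.
elim: n => [|n IH] a b H.
  have h1 : dist e1 a c = 0 by lia.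
  have h2 : dist e2 b d = 0 by lia.
  by rewrite walkn0 (dist_eq0 (c1 a c) h1) (dist_eq0 (c2 b d) h2).
have [a' [Ha Da]] := @lazy1 a c n ltac:(lia).
have [b' [Hb Db]] := @lazy2 b d n ltac:(lia).
rewrite walknS; apply/existsP; exists (a', b'); apply/andP; split; last first.
  by apply: IH; rewrite Da Db; lia.
rewrite /strong_prod /=.
move: Ha Hb; case: eqP => [ea|_]; case: eqP => [eb|_] //= Ha Hb.
- subst; exfalso; rewrite Da Db in H; lia.
- by rewrite Hb eq_sym ea eqxx.
- by rewrite Ha eq_sym eb eqxx !orbT.
- by rewrite Ha Hb !orbT.
Qed.


Lemma proj_walk n : forall x y, walkn p x y n ->
  dist e1 x.1 y.1 <= n /\ dist e2 x.2 y.2 <= n.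
Proof.
elim: n => [|n IH] x y.
  by rewrite walkn0 => /eqP ->; rewrite !dist0.
rewrite walknS => /existsP[w /andP[xw wy]].
have [h1 h2] := IH _ _ wy.
move: xw; rewrite /strong_prod => /or3P[/andP[/eqP E1 E2]|/andP[E1 /eqP E2]|/andP[E1 E2]].
- rewrite E1; split; first lia.
  by have := dist_edge c2 y.2 E2; lia.
- rewrite E2; split; last lia.
  by have := dist_edge c1 y.1 E1; lia.
- by have := dist_edge c1 y.1 E1; have := dist_edge c2 y.2 E2; lia.
Qed.

Lemma prod_dist x y : dist p x y = maxn (dist e1 x.1 y.1) (dist e2 x.2 y.2).
Proof.
case: x y => [a b] [c d] /=.
have W := prod_walk (erefl (maxn (dist e1 a c) (dist e2 b d))).
apply/eqP; rewrite eqn_leq dist_min //=.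
have [h1 h2] := proj_walk (dist_walk (walkn_connect W)).
by rewrite geq_max h1 h2.
Qed.
Lemma nbr_lazy x w : p x w -> ((w.1 == x.1) || e1 x.1 w.1) /\ ((w.2 == x.2) || e2 x.2 w.2).
Proof.
rewrite /strong_prod => /or3P[/andP[/eqP E1 E2]|/andP[E1 /eqP E2]|/andP[E1 E2]].
- by rewrite E1 eqxx E2 orbT.
- by rewrite E2 eqxx E1 orbT.
- by rewrite E1 E2 !orbT.
Qed.

Lemma part1 x y : strong_prod (strong_resolving e1) (strong_resolving e2) x y ->
  max_dist p x y.
Proof.
move=> H; apply/forallP => w; apply/implyP => xw.
have [l1 l2] := nbr_lazy xw.
rewrite !prod_dist.
move: H; rewrite /strong_prod => /or3P[/andP[/eqP E1 S2]|/andP[S1 /eqP E2]|/andP[S1 S2]].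
- have := eq_coord c1 l1; have := sr_coord s2 c2 S2 l2; have := sr_pos c2 S2.
  rewrite -E1; lia.
- have := eq_coord c2 l2; have := sr_coord s1 c1 S1 l1; have := sr_pos c1 S1.
  rewrite -E2; lia.
- have := sr_coord s2 c2 S2 l2; have := sr_coord s1 c1 S1 l1; lia.
Qed.

Lemma L1 x y : max_dist p x y -> dist e2 x.2 y.2 <= dist e1 x.1 y.1 ->
  max_dist e1 x.1 y.1.
Proof.
move=> /forallP m le; apply/forallP => w1; apply/implyP => xw1.
have := implyP (m (w1, x.2)); rewrite /strong_prod /= xw1 eqxx orbT => /(_ isT).
rewrite !prod_dist /= (dist_sym s2 c2 y.2); lia.
Qed.

Lemma L2 x y : max_dist p x y -> dist e1 x.1 y.1 <= dist e2 x.2 y.2 ->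
  max_dist e2 x.2 y.2.
Proof.
move=> /forallP m le; apply/forallP => w2; apply/implyP => xw2.
have := implyP (m (x.1, w2)); rewrite /strong_prod /= xw2 eqxx => /(_ isT).
rewrite !prod_dist /= (dist_sym s1 c1 y.1); lia.
Qed.

Lemma part2 x y : strong_resolving p x y -> cart_sum (strong_resolving e1) (strong_resolving e2) x y.
Proof.
case/andP=> [/andP[neq mxy] myx]; rewrite /cart_sum /strong_resolving.
have nz : 0 < maxn (dist e1 x.1 y.1) (dist e2 x.2 y.2).
  rewrite lt0n; apply/negP => /eqP H0.
  have h1 : dist e1 x.1 y.1 = 0 by lia.
  have h2 : dist e2 x.2 y.2 = 0 by lia.
  clear H0; move: neq; case: x y mxy myx h1 h2 => [a b] [c d] /= _ _ h1 h2.
  by rewrite (dist_eq0 (c1 a c) h1) (dist_eq0 (c2 b d) h2) eqxx.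
case: (leqP (dist e2 x.2 y.2) (dist e1 x.1 y.1)) => le.
  apply/orP; left; apply/andP; split; [apply/andP; split|].
  - apply/eqP => E; move: le nz; rewrite E dist0; lia.
  - exact: L1 mxy le.
  - by apply: L1 myx _; rewrite (dist_sym s1 c1) (dist_sym s2 c2).
apply/orP; right; apply/andP; split; [apply/andP; split|].
- apply/eqP => E; move: le nz; rewrite E dist0; lia.
- by apply: L2 mxy _; lia.
- by apply: L2 myx _; rewrite (dist_sym s1 c1) (dist_sym s2 c2); lia.
Qed.

Lemma srp_sym (T : finType) (e : rel T) : symmetric (strong_resolving e).
Proof.
by move=> u v; rewrite /strong_resolving eq_sym; case: (max_dist e u v); case: (max_dist e v u); rewrite ?andbT ?andbF.
Qed.
End P.

Theorem theorem7 (T1 T2 : finType) (e1 : rel T1) (e2 : rel T2) :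
  simple_graph e1 -> connected_graph e1 ->
  simple_graph e2 -> connected_graph e2 ->
  subgraph (strong_prod (strong_resolving e1) (strong_resolving e2))
           (strong_resolving (strong_prod e1 e2)) /\
  subgraph (strong_resolving (strong_prod e1 e2))
           (cart_sum (strong_resolving e1) (strong_resolving e2)).
Proof.
move=> [_ s1] c1 [_ s2] c2; split => x y H; last exact: part2.
have H' : strong_prod (strong_resolving e1) (strong_resolving e2) y x.
  by move: H; rewrite /strong_prod !(srp_sym _ y.1) !(srp_sym _ y.2) (eq_sym y.1) (eq_sym y.2).
rewrite /strong_resolving (part1 s1 c1 s2 c2 H) (part1 s1 c1 s2 c2 H') !andbT.
case/or3P: H => /andP[A B]; apply/eqP => E; subst y.
- by move: B; rewrite /strong_resolving eqxx.
- by move: A; rewrite /strong_resolving eqxx.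
- by move: A; rewrite /strong_resolving eqxx.
Qed.
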